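(* Let $G$ be a finite simple graph with at least one edge, of order $n$. Then: (i) there exists a mitigating set $S$ of $G$ such that every connected component of the subgraph of $G$ induced by the edge set $S$ is isomorphic to $P_2$ or $P_3$ (the path on $2$ or $3$ vertices); (ii) $\mathrm{es}_{\Delta}(G)\leq n-\alpha(G)$, where $\alpha(G)$ is the independence number of $G$; moreover this bound is sharp, i.e. there exist graphs for which equality holds.
   Context: For a graph $G$ with maximum degree $\Delta(G)$, a set $S\subseteq E(G)$ is a mitigating set if $\Delta(G-S)\leq \Delta(G)-1$. The $\Delta$-edge stability number $\mathrm{es}_{\Delta}(G)$ is the minimum number of edges of $G$ whose removal results in a subgraph $H$ with $\Delta(H)=\Delta(G)-1$, i.e. the minimum size of a mitigating set. The subgraph induced by a set of edges $S$ consists of the edges of $S$ and their endpoints. *)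

(* Defs.v *)
(* A finite simple graph on vertex type T : finType is a
   symmetric irreflexive relation e : rel T. Edges are 2-element vertex sets. *)
From mathcomp Require Import all_boot.
Set Implicit Arguments. Unset Strict Implicit. Unset Printing Implicit Defensive.

Section Graphs.
Variable T : finType.

Definition simple_graph (e : rel T) : Prop := symmetric e /\ irreflexive e.

Definition edges (e : rel T) : {set {set T}} :=
  [set [set x; y] | x in T, y in T & e x y].

Definition deg (e : rel T) (v : T) : nat := #|[set u | e v u]|.
Definition maxdeg (e : rel T) : nat := \max_(v : T) deg e v.

Definition del_edges (e : rel T) (S : {set {set T}}) : rel T :=
  fun x y => e x y && ([set x; y] \notin S).

Definition mitigating (e : rel T) (S : {set {set T}}) : bool :=
  (S \subset edges e) && (maxdeg (del_edges e S) <= (maxdeg e).-1).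

(* Delta-edge stability number: minimum size of a mitigating set
   (E(G) itself is mitigating whenever G has an edge, so the default
   value #|E(G)| is never below the true minimum). *)
Definition es_Delta (e : rel T) : nat :=
  \big[minn/#|edges e|]_(S : {set {set T}} | mitigating e S) #|S|.

Definition independent (e : rel T) (A : {set T}) : bool :=
  [forall x in A, forall y in A, ~~ e x y].
Definition alpha (e : rel T) : nat :=
  \max_(A : {set T} | independent e A) #|A|.

Definition sadj (S : {set {set T}}) : rel T :=
  fun x y => (x != y) && ([set x; y] \in S).
Definition svert (S : {set {set T}}) : {set T} :=
  [set x | [exists y, sadj S x y]].
Definition scomp (S : {set {set T}}) (x : T) : {set T} :=
  [set y | connect (sadj S) x y].
End Graphs.

Definition path_rel (k : nat) : rel 'I_k :=
  fun i j => (i.+1 == j :> nat) || (j.+1 == i :> nat).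

Definition iso_path (T : finType) (S : {set {set T}}) (C : {set T}) (k : nat)
  : Prop :=
  exists f : 'I_k -> T,
    injective f /\ f @: setT = C /\
    (forall i j, sadj S (f i) (f j) = path_rel i j).

(* Main.v *)
Require Import Defs.
From mathcomp Require Import all_boot zify.
Set Implicit Arguments. Unset Strict Implicit. Unset Printing Implicit Defensive.


Section Hall.
Variable T : finType.
Variable r : rel T.

Definition nbr (W A : {set T}) := [set y in W | [exists x in A, r x y]].

Lemma hall_gen n : forall U W : {set T}, #|U| <= n ->
  (forall A : {set T}, A \subset U -> #|A| <= #|nbr W A|) ->
  exists f : T -> T, {in U &, injective f} /\
    (forall u, u \in U -> r u (f u) /\ f u \in W).
Proof.
elim: n => [|n IH] U W hU hH.
  exists id; split; first by move=> x y _ _.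
  move=> u uU; have : 0 < #|U| by apply/card_gt0P; exists u.
  by rewrite leqNgt in hU; rewrite (negbTE hU).
case: (set_0Vmem U) => [->|[u0 u0U]].
  by exists id; split; [move=> x y|move=> u; rewrite inE].
case: (boolP [exists A : {set T}, [&& A \subset U, A != set0, A != U &
                                     #|nbr W A| <= #|A|]]).
- case/existsP=> A /and4P [AU A0 AnU tight].
  have AltU : #|A| < #|U| by apply: proper_card; rewrite properEneq AnU AU.
  have [fA [fAi fAp]] : exists f : T -> T, {in A &, injective f} /\
      (forall u, u \in A -> r u (f u) /\ f u \in W).
    apply: (IH A W); first by rewrite -ltnS (leq_trans AltU).
    by move=> B BA; apply: hH; apply: subset_trans BA AU.
  have [fB [fBi fBp]] : exists f : T -> T, {in U :\: A &, injective f} /\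
      (forall u, u \in U :\: A -> r u (f u) /\ f u \in W :\: nbr W A).
    apply: IH.
      have : 0 < #|A| by rewrite card_gt0.
      have := cardsID A U; rewrite (setIidPr AU); lia.
    move=> B BUA.
    have dBA : B :&: A = set0.
      apply/setP=> x; rewrite !inE; apply/negbTE/andP=> [[xB xA]].
      by move/subsetP: BUA => /(_ x xB); rewrite inE xA.
    have hBA := hH (B :|: A).
    have : B :|: A \subset U.
      by rewrite subUset AU andbT; apply: subset_trans BUA (subsetDl _ _).
    move/hBA; rewrite cardsU dBA cards0 subn0 => h1.
    have h2 : #|nbr W (B :|: A)| <= #|nbr (W :\: nbr W A) B| + #|nbr W A|.
      apply: leq_trans (leq_card_setU _ _); apply: subset_leq_card.
      apply/subsetP=> y; rewrite [in X in X -> _]inE => /andP [yW /existsP [x /andP [xBA rxy]]].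
      rewrite in_setU; case: (boolP (y \in nbr W A)) => yA; first by rewrite orbT.
      rewrite orbF inE in_setD yA yW /=; apply/existsP; exists x; rewrite rxy andbT.
      move: xBA; rewrite in_setU => /orP [] // xA; case/negP: yA.
      by rewrite inE yW; apply/existsP; exists x; rewrite xA.
    rewrite -(leq_add2r #|A|); apply: leq_trans h1 (leq_trans h2 _).
    by rewrite leq_add2l.
  exists (fun x => if x \in A then fA x else fB x); split.
    move=> x y xU yU /=.
    case: (boolP (x \in A)) => xA; case: (boolP (y \in A)) => yA.
    + exact: fAi.
    + have [_] : r y (fB y) /\ fB y \in W :\: nbr W A by apply: fBp; rewrite in_setD yA yU.
      rewrite in_setD => /andP [yN _] exy; case/negP: yN; rewrite -exy inE.
      have [rx xW] := fAp x xA; rewrite xW; apply/existsP; exists x; by rewrite xA.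
    + have [_] : r x (fB x) /\ fB x \in W :\: nbr W A by apply: fBp; rewrite in_setD xA xU.
      rewrite in_setD => /andP [xN _] exy; case/negP: xN; rewrite exy inE.
      have [ry yW] := fAp y yA; rewrite yW; apply/existsP; exists y; by rewrite yA.
    + by apply: fBi; rewrite in_setD ?xA ?yA ?xU ?yU.
  move=> u uU; case: (boolP (u \in A)) => uA; first exact: fAp.
  have [h] : r u (fB u) /\ fB u \in W :\: nbr W A by apply: fBp; rewrite in_setD uA uU.
  by rewrite in_setD => /andP [_ ->].
- rewrite negb_exists => /forallP noTight.
  have : 0 < #|nbr W [set u0]|.
    by apply: leq_trans (hH _ _); rewrite ?cards1 // sub1set.
  case/card_gt0P=> y0; rewrite inE => /andP [y0W /existsP [x]].
  rewrite inE => /andP [/eqP -> ry0]; clear x.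
  have [fB [fBi fBp]] : exists f : T -> T, {in U :\ u0 &, injective f} /\
      (forall u, u \in U :\ u0 -> r u (f u) /\ f u \in W :\ y0).
    apply: IH; first by rewrite -ltnS (leq_trans _ hU) // (cardsD1 u0 U) u0U.
    move=> B BU.
    case: (eqVneq B set0) => [->|B0]; first by rewrite cards0.
    have := noTight B; rewrite negb_and.
    have BU' : B \subset U by apply: subset_trans BU (subsetDl _ _).
    rewrite BU' B0 /=.
    have BnU : B != U.
      apply/eqP=> BeU; move/subsetP: BU => /(_ u0); rewrite BeU u0U !inE eqxx.
      by move/(_ isT).
    rewrite BnU /= -ltnNge => lt1.
    have : #|nbr W B| <= #|nbr (W :\ y0) B|.+1.
      rewrite -addn1 -(cards1 y0); apply: leq_trans (leq_card_setU _ _).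
      apply: subset_leq_card; apply/subsetP=> y; rewrite !inE.
      case: (eqVneq y y0) => [_|yn]; first by rewrite orbT.
      by rewrite orbF.
    by move=> h; rewrite -ltnS (leq_trans lt1 h).
  exists (fun x => if x == u0 then y0 else fB x); split.
    move=> x y xU yU /=.
    case: (eqVneq x u0) => [->|xn]; case: (eqVneq y u0) => [->|yn] //.
    + have [_] : r y (fB y) /\ fB y \in W :\ y0 by apply: fBp; rewrite !inE yn yU.
      by rewrite !inE => /andP [yy _] h; rewrite h eqxx in yy.
    + have [_] : r x (fB x) /\ fB x \in W :\ y0 by apply: fBp; rewrite !inE xn xU.
      by rewrite !inE => /andP [yy _] h; rewrite h eqxx in yy.
    + by apply: fBi; rewrite !inE ?xn ?yn ?xU ?yU.
  move=> u uU; case: (eqVneq u u0) => [->|un]; first by [].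
  have [h] : r u (fB u) /\ fB u \in W :\ y0 by apply: fBp; rewrite !inE un uU.
  by rewrite !inE => /andP [_ ->].
Qed.
End Hall.


Section G.
Variable T : finType.
Variable e : rel T.
Hypothesis esym : symmetric e.

Lemma card_sum (P : pred T) : #|[set u | P u]| = \sum_u (P u : nat).
Proof.
rewrite -sum1_card big_mkcond /=; apply: eq_bigr => u _; rewrite inE.
by case: (P u).
Qed.

Lemma deg_le v : deg e v <= maxdeg e.
Proof. exact: (leq_bigmax_cond (P := xpredT) (F := deg e)). Qed.

Lemma hall_cond (A : {set T}) : (forall a, a \in A -> deg e a = maxdeg e) ->
  0 < maxdeg e -> #|A| <= #|nbr e setT A|.
Proof.
move=> hA hD; rewrite -(leq_pmul2r hD).
have -> : #|A| * maxdeg e = \sum_(a in A) \sum_y (e a y : nat).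
  rewrite -sum_nat_const; apply: eq_bigr => a aA.
  by rewrite -card_sum -/(deg e a) hA.
rewrite exchange_big /= (bigID (fun y => y \in nbr e setT A)) /=.
rewrite [X in _ + X]big1 ?addn0.
  rewrite -sum_nat_const; apply: leq_sum => y _.
  apply: leq_trans (deg_le y); rewrite /deg card_sum.
  rewrite [X in _ <= X](bigID (fun a => a \in A)) /=; apply: leq_trans (leq_addr _ _).
  by apply: eq_leq; apply: eq_bigr => a _; rewrite esym.
move=> y yN; apply: big1 => a aA; case: (boolP (e a y)) => // hay.
by case/negP: yN; rewrite !inE /=; apply/existsP; exists a; rewrite aA.
Qed.

Lemma match_M (U : {set T}) : (forall a, a \in U -> deg e a = maxdeg e) ->
  0 < maxdeg e ->
  exists f : T -> T, {in U &, injective f} /\ (forall u, u \in U -> e u (f u)).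
Proof.
move=> hU hD.
have [f [fi fp]] := @hall_gen T e #|U| U setT (leqnn _)
  (fun A AU => hall_cond (fun a aA => hU a (subsetP AU a aA)) hD).
by exists f; split => // u uU; case: (fp u uU).
Qed.
End G.


Lemma bigmin_le (I : finType) (P : pred I) (F : I -> nat) x j :
  P j -> \big[minn/x]_(i | P i) F i <= F j.
Proof.
move=> Pj; have : j \in index_enum I by rewrite mem_index_enum.
elim: (index_enum I) => // a s IH; rewrite inE big_cons => /orP [/eqP ja|js].
  by rewrite -ja Pj geq_minl.
case: (P a); last exact: IH js.
exact: leq_trans (geq_minr _ _) (IH js).
Qed.

Lemma bigmin_ge (I : finType) (P : pred I) (F : I -> nat) x c :
  c <= x -> (forall i, P i -> c <= F i) -> c <= \big[minn/x]_(i | P i) F i.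
Proof.
move=> cx cF; apply: (big_ind (leq c)) => //.
by move=> a b ca cb; rewrite leq_min ca cb.
Qed.

Section G2.
Variable T : finType.
Variable e : rel T.

Lemma in_edges x y : e x y -> [set x; y] \in edges e.
Proof. by move=> exy; apply: imset2_f; rewrite ?inE. Qed.

Lemma maxdeg_pos x y : e x y -> 0 < maxdeg e.
Proof.
move=> exy; apply: leq_trans (deg_le e x); rewrite /deg; apply/card_gt0P.
by exists y; rewrite inE.
Qed.

Lemma mitig_cover (S : {set {set T}}) : S \subset edges e ->
  (forall m, deg e m = maxdeg e -> exists y, e m y /\ [set m; y] \in S) ->
  mitigating e S.
Proof.
move=> SE hc; rewrite /mitigating SE /=; apply/bigmax_leqP => v _.
have sub : [set u | del_edges e S v u] \subset [set u | e v u].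
  by apply/subsetP=> u; rewrite !inE /del_edges => /andP [].
have := deg_le e v; rewrite leq_eqVlt => /orP [/eqP dv|lt].
  have [y [evy yS]] := hc v dv.
  have : [set u | del_edges e S v u] \proper [set u | e v u].
    apply/properP; split => //; exists y; first by rewrite inE.
    by rewrite inE /del_edges yS andbF.
  move/proper_card; rewrite -/(deg e v) dv /deg; lia.
have := subset_leq_card sub; rewrite -/(deg e v) -/(deg (del_edges e S) v); lia.
Qed.

Lemma es_le S : mitigating e S -> es_Delta e <= #|S|.
Proof. exact: bigmin_le. Qed.

Lemma es_ge1 x y : e x y -> 1 <= es_Delta e.
Proof.
move=> exy; apply: bigmin_ge.
  by apply/card_gt0P; exists [set x; y]; apply: in_edges.
move=> S; rewrite /mitigating => /andP [_ hm]; rewrite card_gt0.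
apply/eqP=> S0; move: hm; rewrite S0.
have -> : maxdeg (del_edges e set0) = maxdeg e.
  rewrite /maxdeg; apply: eq_bigr => v _; rewrite /deg; apply: eq_card => u.
  by rewrite !inE /del_edges inE andbT.
have := maxdeg_pos exy; lia.
Qed.
End G2.


Section P2.
Variable T : finType.
Variable e : rel T.

Lemma indepP (A : {set T}) x y : independent e A -> x \in A -> y \in A -> ~~ e x y.
Proof.
move=> iA xA yA; move/forallP: iA => /(_ x); rewrite xA /= => /forallP /(_ y).
by rewrite yA.
Qed.

Definition gnb (v : T) : T := odflt v [pick y | e v y].

Lemma gnbP v : 0 < deg e v -> e v (gnb v).
Proof.
move=> /card_gt0P [y]; rewrite inE => evy; rewrite /gnb.
by case: pickP => [z ->|/(_ y)]; rewrite ?evy.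
Qed.

Lemma alpha_witness : exists2 A : {set T}, independent e A & alpha e = #|A|.
Proof.
have h : 0 < #|independent e|.
  apply/card_gt0P; exists set0; rewrite unfold_in /independent.
  by apply/forallP=> x; rewrite inE.
have [A iA hA] := @eq_bigmax_cond _ (independent e) (fun A : {set T} => #|A|) h.
by exists A => //; exact: hA.
Qed.

Lemma es_bound : simple_graph e -> (exists x y, e x y) -> es_Delta e <= #|T| - alpha e.
Proof.
move=> [esym eirr] [x0 [y0 exy0]].
have Dpos := maxdeg_pos exy0.
have [A iA ->] := alpha_witness.
pose M := [set m | deg e m == maxdeg e].
pose U := A :&: M.
have [f [fi fe]] : exists f : T -> T, {in U &, injective f} /\ (forall u, u \in U -> e u (f u)).
  apply: match_M => // a; rewrite !inE => /andP [_ /eqP] //.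
have fA : forall u, u \in U -> f u \notin A.
  move=> u uU; apply/negP=> fuA; have := fe u uU; move: uU; rewrite inE => /andP [uA _].
  by rewrite (negbTE (indepP iA uA fuA)).
pose R := (M :\: A) :\: f @: U.
pose S := [set [set a; f a] | a in U] :|: [set [set b; gnb b] | b in R].
have hm : mitigating e S.
  apply: mitig_cover.
    apply/subsetP=> s; rewrite in_setU => /orP [] /imsetP [a aU ->]; apply: in_edges.
      exact: fe.
    apply: gnbP; move: aU; rewrite !inE => /and3P [_ _ /eqP ->] //.
  move=> m dm.
  case: (boolP (m \in A)) => mA.
    have mU : m \in U by rewrite !inE mA dm eqxx.
    exists (f m); split; first exact: fe.
    by rewrite in_setU; apply/orP; left; apply: imset_f.
  case: (boolP (m \in f @: U)) => [/imsetP [u uU mfu]|mfU].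
    exists u; split; first by rewrite esym mfu fe.
    rewrite in_setU; apply/orP; left; apply/imsetP; exists u => //.
    by rewrite mfu setUC.
  exists (gnb m); split; first by apply: gnbP; rewrite dm.
  rewrite in_setU; apply/orP; right; apply: imset_f.
  by rewrite !inE mfU mA dm eqxx.
apply: leq_trans (es_le hm) _.
apply: leq_trans (leq_card_setU _ _) _.
apply: leq_trans (leq_add (leq_imset_card _ _) (leq_imset_card _ _)) _.
have cfU : #|f @: U| = #|U| by apply: card_in_imset.
have sub1 : f @: U \subset ~: A.
  by apply/subsetP=> z /imsetP [u uU ->]; rewrite inE fA.
have sub2 : R \subset ~: A :\: f @: U.
  by apply/subsetP=> z; rewrite !inE => /and3P [h1 h2 _]; rewrite h1 h2.
have := subset_leq_card sub2.
have := cardsID (f @: U) (~: A); rewrite (setIidPr sub1).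
have := cardsC A.
lia.
Qed.
End P2.


Section Comp.
Variable T : finType.
Variable S : {set {set T}}.
Local Notation a := (sadj S).

Lemma in3P (u v w y : T) : y \in [set u; v; w] -> [\/ y = u, y = v | y = w].
Proof.
rewrite !inE => /orP [/orP [] |] /eqP ->; by [constructor 1|constructor 2|constructor 3].
Qed.

Lemma sadj_sym : symmetric a.
Proof. by move=> x y; rewrite /sadj eq_sym setUC. Qed.

Lemma sadj_neq x y : a x y -> x != y.
Proof. by case/andP. Qed.

Lemma sadj_irr x : a x x = false.
Proof. by rewrite /sadj eqxx. Qed.

Lemma comp_closed (C : {set T}) :
  (forall x y, x \in C -> a x y -> y \in C) -> closed a C.
Proof.
move=> h x y axy; case: (boolP (x \in C)) => xC; first by rewrite (h x y xC axy).
case: (boolP (y \in C)) => yC //; case/negP: xC; apply: (h y) => //.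
by rewrite sadj_sym.
Qed.

Lemma scomp_eq (C : {set T}) x : x \in C ->
  (forall x y, x \in C -> a x y -> y \in C) ->
  (forall y, y \in C -> connect a x y) -> scomp S x = C.
Proof.
move=> xC hcl hcon; apply/setP=> y; rewrite inE.
apply/idP/idP; last exact: hcon.
by move=> cxy; rewrite -(closed_connect (comp_closed hcl) cxy).
Qed.

Lemma comp_P3 u v w : a v u -> a v w -> u != w ->
  (forall z, a u z -> z = v) -> (forall z, a w z -> z = v) ->
  (forall z, a v z -> z = u \/ z = w) ->
  forall x, x \in [set u; v; w] -> iso_path S (scomp S x) 3.
Proof.
move=> avu avw uw hu hw hv x xC.
have uv : u != v by rewrite eq_sym; apply: sadj_neq avu.
have vw : v != w by apply: sadj_neq avw.
have auv : a u v by rewrite sadj_sym.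
have awv : a w v by rewrite sadj_sym.
have cv : forall y, y \in [set u; v; w] -> connect a v y /\ connect a y v.
  move=> y; case/in3P => ->; split;
    by rewrite ?connect0 // connect1.
rewrite (@scomp_eq [set u; v; w]) //.
- exists (fun i : 'I_3 => nth u [:: u; v; w] i); split; [|split].
  + move=> i j; case: i => [[|[|[|i]]] hi] //; case: j => [[|[|[|j]]] hj] //= h;
      try (by apply: val_inj);
      by move: uv vw uw; rewrite ?h eqxx ?andbF.
  + apply/setP=> y; apply/imsetP/idP.
      by case=> i _ ->; case: i => [[|[|[|i]]] hi] //=; rewrite !inE eqxx ?orbT.
    case/in3P => ->.
    * by exists (Ordinal (isT : 0 < 3)).
    * by exists (Ordinal (isT : 1 < 3)).
    * by exists (Ordinal (isT : 2 < 3)).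
  + have auw : a u w = false.
      by apply/negP=> /hu wv; rewrite wv eqxx in vw.
    have awu : a w u = false by rewrite sadj_sym.
    move=> i j; case: i => [[|[|[|i]]] hi] //; case: j => [[|[|[|j]]] hj] //=;
      by rewrite /path_rel /= ?sadj_irr.
- move=> y z yC; case/in3P: yC => -> ayz.
  + by move/hu: ayz => ->; rewrite ?inE eqxx orbT.
  + by case/hv: ayz => ->; rewrite ?inE eqxx ?orbT.
  + by move/hw: ayz => ->; rewrite ?inE eqxx orbT.
- move=> y yC; have [_ xv] := cv x xC; have [vy _] := cv y yC.
  exact: connect_trans xv vy.
Qed.

Lemma comp_P2 u v : a u v ->
  (forall z, a u z -> z = v) -> (forall z, a v z -> z = u) ->
  forall x, x \in [set u; v] -> iso_path S (scomp S x) 2.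
Proof.
move=> auv hu hv x xC.
have uv : u != v by apply: sadj_neq auv.
have avu : a v u by rewrite sadj_sym.
rewrite (@scomp_eq [set u; v]) //.
- exists (fun i : 'I_2 => nth u [:: u; v] i); split; [|split].
  + move=> i j; case: i => [[|[|i]] hi] //; case: j => [[|[|j]] hj] //= h;
      try (by apply: val_inj);
      by move: uv; rewrite ?h eqxx.
  + apply/setP=> y; apply/imsetP/idP.
      by case=> i _ ->; case: i => [[|[|i]] hi] //=; rewrite !inE eqxx ?orbT.
    rewrite !inE => /orP [] /eqP ->.
    * by exists (Ordinal (isT : 0 < 2)).
    * by exists (Ordinal (isT : 1 < 2)).
  + move=> i j; case: i => [[|[|i]] hi] //; case: j => [[|[|j]] hj] //=;
      by rewrite /path_rel /= ?sadj_irr.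
- move=> y z; rewrite !inE => /orP [] /eqP -> ayz.
  + by move/hu: ayz => ->; rewrite ?inE eqxx orbT.
  + by move/hv: ayz => ->; rewrite ?inE eqxx.
- move=> y; move: xC; rewrite !inE => /orP [] /eqP -> /orP [] /eqP ->;
    by rewrite ?connect0 // connect1.
Qed.

Lemma comps :
  (forall v y z, a v y -> a v z -> y != z ->
    [/\ (forall t, a y t -> t = v), (forall t, a z t -> t = v) &
        (forall t, a v t -> t = y \/ t = z)]) ->
  forall x, x \in svert S -> iso_path S (scomp S x) 2 \/ iso_path S (scomp S x) 3.
Proof.
move=> HQ x; rewrite inE => /existsP [y axy].
case: (boolP [exists z, a x z && (z != y)]).
  case/existsP=> z /andP [axz zy].
  have yz : y != z by rewrite eq_sym.
  have [hy hz hx] := HQ x y z axy axz yz.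
  right; apply: (@comp_P3 y x z) => //.
  by rewrite !inE eqxx orbT.
rewrite negb_exists => /forallP hx.
have hx' : forall t, a x t -> t = y.
  by move=> t axt; move: (hx t); rewrite axt /= negbK => /eqP.
case: (boolP [exists z, a y z && (z != x)]).
  case/existsP=> z /andP [ayz zx].
  have ayx : a y x by rewrite sadj_sym.
  have xz : x != z by rewrite eq_sym.
  have [hx2 hz hy] := HQ y x z ayx ayz xz.
  right; apply: (@comp_P3 x y z) => //.
  by rewrite !inE eqxx.
rewrite negb_exists => /forallP hy.
have hy' : forall t, a y t -> t = x.
  by move=> t ayt; move: (hy t); rewrite ayt /= negbK => /eqP.
left; apply: (@comp_P2 x y) => //.
by rewrite !inE eqxx.
Qed.
End Comp.


Section Match.
Variable T : finType.
Variable e : rel T.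
Hypothesis esym : symmetric e.
Hypothesis eirr : irreflexive e.

Definition okm (M : {set T}) (q : {set T} * {ffun T -> T}) : bool :=
  (q.1 \subset M) &&
  [forall x in q.1, [&& q.2 x \in q.1, q.2 x != x, q.2 (q.2 x) == x & e x (q.2 x)]].

Lemma max_matching (M : {set T}) : exists (D : {set T}) (p : T -> T),
  [/\ D \subset M,
      (forall x, x \in D -> [/\ p x \in D, p x != x, p (p x) = x & e x (p x)]) &
      (forall x y, x \in M :\: D -> y \in M :\: D -> ~~ e x y)].
Proof.
have ok0 : okm M (set0, [ffun x => x]).
  by rewrite /okm sub0set /=; apply/forallP=> x; rewrite inE.
case: (@arg_maxnP _ (set0, [ffun x => x]) (okm M) (fun q : {set T} * {ffun T -> T} => #|q.1|) ok0) => q /andP [qM /forallP qok] qmax.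
exists q.1, q.2; split => //.
  move=> x xD; move: (qok x); rewrite xD /= => /and4P [h1 h2 /eqP h3 h4].
  by split.
move=> x y; rewrite !inE => /andP [xD xM] /andP [yD yM]; apply/negP=> exy.
have xy : x != y by apply/eqP=> h; rewrite h eirr in exy.
have yx : (y == x) = false by rewrite eq_sym (negbTE xy).
pose p' := [ffun z => if z == x then y else if z == y then x else q.2 z].
pose D' := x |: (y |: q.1).
have ok' : okm M (D', p').
  rewrite /okm /= !subUset !sub1set xM yM qM /=.
  apply/forallP=> z; apply/implyP; rewrite !inE => hz.
  have qz : forall z, z \in q.1 -> [&& q.2 z \in q.1, q.2 z != z, q.2 (q.2 z) == z & e z (q.2 z)].
    by move=> z' z'D; move: (qok z'); rewrite z'D.
  case: (eqVneq z x) => [->|zx].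
    by rewrite !ffunE eqxx yx eqxx /= exy ?orbT ?eqxx.
  case: (eqVneq z y) => [->|zy].
    by rewrite !ffunE yx eqxx /= eqxx xy esym exy ?eqxx.
  move: hz; rewrite (negbTE zx) (negbTE zy) /= => zD.
  case/and4P: (qz z zD) => pzD pzz /eqP ppz ez.
  have pzx : q.2 z != x by apply/eqP=> h; rewrite -h pzD in xD.
  have pzy : q.2 z != y by apply/eqP=> h; rewrite -h pzD in yD.
  rewrite !ffunE (negbTE zx) (negbTE zy) (negbTE pzx) (negbTE pzy) pzD !orbT /=.
  by rewrite pzz ppz eqxx ez.
have := qmax _ ok'; rewrite /D' /= !cardsU1 !inE (negbTE xD) (negbTE yD) (negbTE xy) /=.
lia.
Qed.
End Match.


Lemma set2_eq (T : finType) (a b c d : T) : [set a; b] = [set c; d] -> a != b ->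
  (a = c /\ b = d) \/ (a = d /\ b = c).
Proof.
move=> h ab.
have : a \in [set c; d] by rewrite -h !inE eqxx.
have : b \in [set c; d] by rewrite -h !inE eqxx orbT.
rewrite !inE => /orP [] /eqP bc /orP [] /eqP ac.
- by move: ab; rewrite ac bc eqxx.
- by right.
- by left.
- by move: ab; rewrite ac bc eqxx.
Qed.

Section P1.
Variable T : finType.
Variable e : rel T.
Hypothesis esym : symmetric e.
Hypothesis eirr : irreflexive e.
Variables x0 y0 : T.
Hypothesis exy0 : e x0 y0.

Lemma part1 : exists S : {set {set T}}, mitigating e S /\
  forall x, x \in svert S -> iso_path S (scomp S x) 2 \/ iso_path S (scomp S x) 3.
Proof.
have Dpos := maxdeg_pos exy0.
pose M := [set m | deg e m == maxdeg e].
have [D [p [DM hp hmax]]] := max_matching esym eirr M.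
pose U := M :\: D.
have [f [fi fe]] : exists f : T -> T, {in U &, injective f} /\ (forall u, u \in U -> e u (f u)).
  apply: match_M => // a; rewrite !inE => /andP [_ /eqP] //.
have fU : forall u, u \in U -> f u \notin U.
  move=> u uU; apply/negP=> fuU; have := hmax u (f u) uU fuU.
  by rewrite fe.
have UD : forall x, x \in U -> x \notin D by move=> x; rewrite inE => /andP [].
pose fS := f @: U.
pose kept x := ~~ ((x \in fS) && (p x \in fS)).
have keptp : forall x, x \in D -> kept (p x) = kept x.
  move=> x xD; have [_ _ ppx _] := hp x xD; by rewrite /kept ppx andbC.
pose S := [set [set u; f u] | u in U] :|: [set [set x; p x] | x in [set x in D | kept x]].
have char : forall a b, sadj S a b ->
    [\/ a \in U /\ b = f a, b \in U /\ a = f b | [/\ a \in D, b = p a & kept a]].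
  move=> a b /andP [ab]; rewrite in_setU => /orP [] /imsetP [u uK h].
    case: (set2_eq h ab) => [[-> ->]|[-> ->]].
      by constructor 1.
    by constructor 2.
  move: uK; rewrite inE => /andP [uD ku].
  have [pD _ ppu _] := hp u uD.
  case: (set2_eq h ab) => [[-> ->]|[-> ->]].
    by constructor 3.
  by constructor 3; rewrite ?ppu ?keptp.
have leafU : forall u t, u \in U -> sadj S u t -> t = f u.
  move=> u t uU /char [] [] //.
    by move=> tU uf; move: (fU t tU); rewrite -uf uU.
  by move=> uD; rewrite (negbTE (UD u uU)) in uD.
have nbrN : forall v t, v \notin U -> sadj S v t ->
    (t \in U /\ f t = v) \/ [/\ v \in D, t = p v & kept v].
  move=> v t vU /char [] [].
  - by move=> vU'; rewrite vU' in vU.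
  - by move=> tU ->; left.
  - by move=> *; right.
have leafP : forall v t, v \in D -> kept v -> v \in fS -> sadj S (p v) t -> t = v.
  move=> v t vD kv vfS; have [pD _ ppv _] := hp v vD.
  move/char=> [] [].
  - by move=> pU; rewrite (negbTE (UD _ pU)) in pD.
  - move=> tU pf; move: kv; rewrite /kept vfS /= pf.
    by rewrite (imset_f f tU).
  - by move=> _ ->.
have Qaux : forall v y z, v \notin U -> y \in U -> f y = v -> v \in D -> z = p v -> kept v ->
    [/\ (forall t, sadj S y t -> t = v), (forall t, sadj S z t -> t = v) &
        (forall t, sadj S v t -> t = y \/ t = z)].
  move=> v y z vU yU fyv vD zp kv; split.
  - by move=> t /(leafU _ _ yU) ->.
  - move=> t; rewrite zp; apply: leafP => //; rewrite -fyv; exact: imset_f.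
  - move=> t /(nbrN _ _ vU) [[tU ftv]|[_ -> _]]; last by right.
    by left; apply: fi => //; rewrite ftv.
exists S; split.
  apply: mitig_cover.
    apply/subsetP=> s; rewrite in_setU => /orP [] /imsetP [a aU ->]; apply: in_edges.
      exact: fe.
    by move: aU; rewrite inE => /andP [aD _]; have [_ _ _ ->] := hp a aD.
  move=> m dm.
  have mM : m \in M by rewrite inE dm.
  case: (boolP (m \in U)) => mU.
    exists (f m); split; first exact: fe.
    by rewrite in_setU; apply/orP; left; apply: imset_f.
  have mD : m \in D by move: mU; rewrite inE mM andbT negbK.
  case: (boolP (kept m)) => km.
    exists (p m); split; first by have [_ _ _ ->] := hp m mD.
    by rewrite in_setU; apply/orP; right; apply: imset_f; rewrite inE mD.
  move: km; rewrite /kept negbK => /andP [/imsetP [u uU mfu] _].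
  exists u; split; first by rewrite esym mfu fe.
  rewrite in_setU; apply/orP; left; apply/imsetP; exists u => //.
  by rewrite mfu setUC.
apply: comps => v y z avy avz yz.
case: (boolP (v \in U)) => vU.
  by move: yz; rewrite (leafU _ _ vU avy) (leafU _ _ vU avz) eqxx.
case: (nbrN _ _ vU avy) => [[yU fyv]|[vD yp kv]];
case: (nbrN _ _ vU avz) => [[zU fzv]|[vD2 zp kv2]].
- by move: yz; rewrite (fi y z yU zU) ?fyv ?fzv ?eqxx.
- exact: Qaux.
- have [h1 h2 h3] := Qaux v z y vU zU fzv vD yp kv.
  split => // t /h3 [] ->; by [right|left].
- by move: yz; rewrite yp zp eqxx.
Qed.
End P1.


Lemma alpha_K2 : alpha (fun x y : bool => x != y) = 1.
Proof.
apply/eqP; rewrite eqn_leq; apply/andP; split.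
  apply/bigmax_leqP => A iA; rewrite leqNgt; apply/negP.
  case/card_gt1P=> x [y [xA yA xy]].
  by move: (indepP iA xA yA); rewrite xy.
apply: leq_trans (leq_bigmax_cond (P := independent (fun x y : bool => x != y))
                   (F := fun A : {set bool} => #|A|) [set true] _).
  by rewrite cards1.
apply/forallP=> x; apply/implyP; rewrite inE => /eqP ->.
by apply/forallP=> y; apply/implyP; rewrite inE => /eqP ->.
Qed.

Theorem theorem2p1 (T : finType) (e : rel T) :
  simple_graph e -> (exists x y, e x y) ->
  (* (i) *)
  (exists S : {set {set T}}, mitigating e S /\
     forall x, x \in svert S ->
       iso_path S (scomp S x) 2 \/ iso_path S (scomp S x) 3) /\
  (* (ii) bound *)
  es_Delta e <= #|T| - alpha e /\
  (* (ii) sharpness *)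
  (exists (T' : finType) (e' : rel T'),
     simple_graph e' /\ (exists x y, e' x y) /\
     es_Delta e' = #|T'| - alpha e').
Proof.
move=> [esym eirr] [x0 [y0 exy0]].
split. have h := part1 esym eirr exy0. exact h.
split; first by apply: es_bound; [split|exists x0, y0].
have sK : simple_graph (fun x y : bool => x != y).
  by split; [move=> x y; rewrite /= eq_sym | move=> x; rewrite /= eqxx].
have eK : (fun x y : bool => x != y) true false by [].
exists bool, (fun x y : bool => x != y); split => //; split; first by exists true, false.
apply/eqP; rewrite eqn_leq; apply/andP; split.
  by apply: es_bound => //; exists true, false.
rewrite card_bool alpha_K2; exact: (@es_ge1 bool (fun x y : bool => x != y) true false eK).
Qed.
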